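(* Let $G=\mathfrak{S}_3$ with identity $id$. Let $(\mu_t)_{t\ge0}$ (resp. $(\eta_t)_{t\ge0}$) be the continuous convolution semigroup of probability measures on $G$ starting from $\delta_{id}$ associated with the jump measure $m$ (resp. $m_0$), where $m((12))=0,\ m((13))=1,\ m((23))=2,\ m((123))=2,\ m((132))=0$, and $m_0((12))=m_0((13))=m_0((23))=m_0((123))=m_0((132))=1$ (both measures vanish at $id$). Then $\mu_1$ is quasi-invariant by conjugation, and for every $n\in\mathbb{N}$, $\int_G(\mu_1^g)^{*n}\,dg=\eta_1^{*n}$.
   Context: The convolution semigroup with jump measure $m$ is the family of laws of the compound Poisson process with jump measure $m$: $\mu_t=e^{-t\,m(G)}\sum_{k\ge0}\frac{t^k}{k!}m^{*k}$ (with $m^{*0}=\delta_{id}$). For $g\in G$, $\mu^g$ is the image of $\mu$ under $x\mapsto g^{-1}xg$; $dg$ is the uniform probability measure on $G$. A probability measure $\mu$ is quasi-invariant by conjugation if there exists a probability measure $\nu$ with $\int_G(\mu^g)^{*n}dg=\nu^{*n}$ for all $n\in\mathbb{N}$. *)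

(* Defs.v *)
From HB Require Import structures.
From mathcomp Require Import all_boot all_order all_algebra all_fingroup.
From mathcomp Require Import all_classical all_reals all_analysis.
Set Implicit Arguments. Unset Strict Implicit. Unset Printing Implicit Defensive.
Import Order.TTheory GRing.Theory Num.Theory.
Import numFieldNormedType.Exports.
Local Open Scope ring_scope.

(* G = S_3 = permutations of {0,1,2} (standing for {1,2,3}). *)

Section Defs.
Variable R : realType.

Definition meas := {perm 'I_3} -> R.

Definition delta_id : meas := fun x => (x == 1%g)%:R.

Definition conv (mu nu : meas) : meas :=
  fun x => \sum_(y : {perm 'I_3}) mu y * nu (y^-1 * x)%g.

Definition convn (mu : meas) (n : nat) : meas := iter n (conv mu) delta_id.

(* mu^g = image of mu under x |-> g^-1 x g  (= x ^ g in MathComp);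
   hence mu^g({y}) = mu({g y g^-1}) = mu(y ^ g^-1). *)
Definition conj_img (mu : meas) (g : {perm 'I_3}) : meas :=
  fun y => mu (y ^ g^-1)%g.

Definition unif_avg (f : {perm 'I_3} -> meas) : meas :=
  fun x => (#|{perm 'I_3}|%:R)^-1 * \sum_(g : {perm 'I_3}) f g x.

Definition is_prob (nu : meas) : Prop :=
  (forall x, 0 <= nu x) /\ \sum_(x : {perm 'I_3}) nu x = 1.

Definition mass (m : meas) : R := \sum_(x : {perm 'I_3}) m x.

(* law at time t of the compound Poisson process with jump measure m:
   mu_t = e^{-t m(G)} sum_{k>=0} t^k/k! m^{*k}
   (the series, absolutely convergent, is the limit of its partial sums) *)
Definition cpsg (m : meas) (t : R) : meas :=
  fun x => expR (- (t * mass m)) *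
           limn (series (fun k : nat => t ^+ k / (k`!)%:R * convn m k x)).

Definition quasi_invariant (mu : meas) : Prop :=
  exists nu : meas, is_prob nu /\
    forall n : nat, unif_avg (fun g => convn (conj_img mu g) n) = convn nu n.

End Defs.

Definition i0 : 'I_3 := inord 0.
Definition i1 : 'I_3 := inord 1.
Definition i2 : 'I_3 := inord 2.

Definition t12 : {perm 'I_3} := tperm i0 i1.
Definition t13 : {perm 'I_3} := tperm i0 i2.
Definition t23 : {perm 'I_3} := tperm i1 i2.
(* the 3-cycle (123): 1 -> 2 -> 3 -> 1 *)
Definition c123 : {perm 'I_3} := (tperm i0 i1 * tperm i0 i2)%g.
Definition c132 : {perm 'I_3} := (c123^-1)%g.

Lemma c123_spec : [/\ c123 i0 = i1, c123 i1 = i2 & c123 i2 = i0].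
Proof.
have n01 : i0 != i1 by apply/eqP => /(congr1 val); rewrite /= !inordK.
have n02 : i0 != i2 by apply/eqP => /(congr1 val); rewrite /= !inordK.
have n12 : i1 != i2 by apply/eqP => /(congr1 val); rewrite /= !inordK.
have n10 : i1 != i0 by rewrite eq_sym.
have n20 : i2 != i0 by rewrite eq_sym.
have n21 : i2 != i1 by rewrite eq_sym.
rewrite /c123 !permM; split.
- by rewrite tpermL (tpermD n01 n21).
- by rewrite tpermR tpermL.
- by rewrite (tpermD n02 n12) tpermR.
Qed.

Definition m_jump (R : realType) : meas R := fun x =>
  if x == t13 then 1 else if x == t23 then 2 else if x == c123 then 2 else 0.

Definition m0_jump (R : realType) : meas R := fun x => if x == 1%g then 0 else 1.

(* Main.v *)
Require Import Defs.
From HB Require Import structures.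
From mathcomp Require Import all_boot all_order all_algebra all_fingroup.
From mathcomp Require Import all_classical all_reals all_analysis.
From mathcomp Require Import ring lra.
Import Order.TTheory GRing.Theory Num.Theory.
Import numFieldNormedType.Exports.
Local Open Scope ring_scope.

Lemma n01 : i0 != i1. Proof. by apply/eqP => /(congr1 val); rewrite /= !inordK. Qed.
Lemma n02 : i0 != i2. Proof. by apply/eqP => /(congr1 val); rewrite /= !inordK. Qed.
Lemma n12 : i1 != i2. Proof. by apply/eqP => /(congr1 val); rewrite /= !inordK. Qed.
Lemma n10 : i1 != i0. Proof. by rewrite eq_sym n01. Qed.
Lemma n20 : i2 != i0. Proof. by rewrite eq_sym n02. Qed.
Lemma n21 : i2 != i1. Proof. by rewrite eq_sym n12. Qed.

Lemma ord3 (i : 'I_3) : i = i0 \/ i = i1 \/ i = i2.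
Proof.
case: i => [[|[|[|k]]] Hk] //.
- by left; apply/val_inj; rewrite /= inordK.
- by right; left; apply/val_inj; rewrite /= inordK.
- by right; right; apply/val_inj; rewrite /= inordK.
Qed.

Lemma t12_0 : t12 i0 = i1. Proof. by rewrite /t12 tpermL. Qed.
Lemma t12_1 : t12 i1 = i0. Proof. by rewrite /t12 tpermR. Qed.
Lemma t12_2 : t12 i2 = i2. Proof. exact: tpermD n02 n12. Qed.
Lemma t13_0 : t13 i0 = i2. Proof. by rewrite /t13 tpermL. Qed.
Lemma t13_1 : t13 i1 = i1. Proof. exact: tpermD n01 n21. Qed.
Lemma t13_2 : t13 i2 = i0. Proof. by rewrite /t13 tpermR. Qed.
Lemma t23_0 : t23 i0 = i0. Proof. exact: tpermD n10 n20. Qed.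
Lemma t23_1 : t23 i1 = i2. Proof. by rewrite /t23 tpermL. Qed.
Lemma t23_2 : t23 i2 = i1. Proof. by rewrite /t23 tpermR. Qed.
Lemma c123_0 : c123 i0 = i1. Proof. by case: c123_spec. Qed.
Lemma c123_1 : c123 i1 = i2. Proof. by case: c123_spec. Qed.
Lemma c123_2 : c123 i2 = i0. Proof. by case: c123_spec. Qed.
Lemma c132_0 : c132 i0 = i2. Proof. by rewrite -c123_2 /c132 permK. Qed.
Lemma c132_1 : c132 i1 = i0. Proof. by rewrite -c123_0 /c132 permK. Qed.
Lemma c132_2 : c132 i2 = i1. Proof. by rewrite -c123_1 /c132 permK. Qed.
Definition vals := (t12_0, t12_1, t12_2, t13_0, t13_1, t13_2, t23_0, t23_1, t23_2,
  c123_0, c123_1, c123_2, c132_0, c132_1, c132_2).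
Lemma neq_1_t12 : (1%g == t12 :> {perm 'I_3}) = false.
Proof. by apply/negbTE/eqP => /permP/(_ i0); rewrite ?perm1 !vals => /(congr1 val); rewrite /= !inordK. Qed.
Lemma neq_1_t13 : (1%g == t13 :> {perm 'I_3}) = false.
Proof. by apply/negbTE/eqP => /permP/(_ i0); rewrite ?perm1 !vals => /(congr1 val); rewrite /= !inordK. Qed.
Lemma neq_1_t23 : (1%g == t23 :> {perm 'I_3}) = false.
Proof. by apply/negbTE/eqP => /permP/(_ i1); rewrite ?perm1 !vals => /(congr1 val); rewrite /= !inordK. Qed.
Lemma neq_1_c123 : (1%g == c123 :> {perm 'I_3}) = false.
Proof. by apply/negbTE/eqP => /permP/(_ i0); rewrite ?perm1 !vals => /(congr1 val); rewrite /= !inordK. Qed.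
Lemma neq_1_c132 : (1%g == c132 :> {perm 'I_3}) = false.
Proof. by apply/negbTE/eqP => /permP/(_ i0); rewrite ?perm1 !vals => /(congr1 val); rewrite /= !inordK. Qed.
Lemma neq_t12_1 : (t12 == 1%g :> {perm 'I_3}) = false.
Proof. by apply/negbTE/eqP => /permP/(_ i0); rewrite ?perm1 !vals => /(congr1 val); rewrite /= !inordK. Qed.
Lemma neq_t12_t13 : (t12 == t13 :> {perm 'I_3}) = false.
Proof. by apply/negbTE/eqP => /permP/(_ i0); rewrite ?perm1 !vals => /(congr1 val); rewrite /= !inordK. Qed.
Lemma neq_t12_t23 : (t12 == t23 :> {perm 'I_3}) = false.
Proof. by apply/negbTE/eqP => /permP/(_ i0); rewrite ?perm1 !vals => /(congr1 val); rewrite /= !inordK. Qed.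
Lemma neq_t12_c123 : (t12 == c123 :> {perm 'I_3}) = false.
Proof. by apply/negbTE/eqP => /permP/(_ i1); rewrite ?perm1 !vals => /(congr1 val); rewrite /= !inordK. Qed.
Lemma neq_t12_c132 : (t12 == c132 :> {perm 'I_3}) = false.
Proof. by apply/negbTE/eqP => /permP/(_ i0); rewrite ?perm1 !vals => /(congr1 val); rewrite /= !inordK. Qed.
Lemma neq_t13_1 : (t13 == 1%g :> {perm 'I_3}) = false.
Proof. by apply/negbTE/eqP => /permP/(_ i0); rewrite ?perm1 !vals => /(congr1 val); rewrite /= !inordK. Qed.
Lemma neq_t13_t12 : (t13 == t12 :> {perm 'I_3}) = false.
Proof. by apply/negbTE/eqP => /permP/(_ i0); rewrite ?perm1 !vals => /(congr1 val); rewrite /= !inordK. Qed.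
Lemma neq_t13_t23 : (t13 == t23 :> {perm 'I_3}) = false.
Proof. by apply/negbTE/eqP => /permP/(_ i0); rewrite ?perm1 !vals => /(congr1 val); rewrite /= !inordK. Qed.
Lemma neq_t13_c123 : (t13 == c123 :> {perm 'I_3}) = false.
Proof. by apply/negbTE/eqP => /permP/(_ i0); rewrite ?perm1 !vals => /(congr1 val); rewrite /= !inordK. Qed.
Lemma neq_t13_c132 : (t13 == c132 :> {perm 'I_3}) = false.
Proof. by apply/negbTE/eqP => /permP/(_ i1); rewrite ?perm1 !vals => /(congr1 val); rewrite /= !inordK. Qed.
Lemma neq_t23_1 : (t23 == 1%g :> {perm 'I_3}) = false.
Proof. by apply/negbTE/eqP => /permP/(_ i1); rewrite ?perm1 !vals => /(congr1 val); rewrite /= !inordK. Qed.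
Lemma neq_t23_t12 : (t23 == t12 :> {perm 'I_3}) = false.
Proof. by apply/negbTE/eqP => /permP/(_ i0); rewrite ?perm1 !vals => /(congr1 val); rewrite /= !inordK. Qed.
Lemma neq_t23_t13 : (t23 == t13 :> {perm 'I_3}) = false.
Proof. by apply/negbTE/eqP => /permP/(_ i0); rewrite ?perm1 !vals => /(congr1 val); rewrite /= !inordK. Qed.
Lemma neq_t23_c123 : (t23 == c123 :> {perm 'I_3}) = false.
Proof. by apply/negbTE/eqP => /permP/(_ i0); rewrite ?perm1 !vals => /(congr1 val); rewrite /= !inordK. Qed.
Lemma neq_t23_c132 : (t23 == c132 :> {perm 'I_3}) = false.
Proof. by apply/negbTE/eqP => /permP/(_ i0); rewrite ?perm1 !vals => /(congr1 val); rewrite /= !inordK. Qed.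
Lemma neq_c123_1 : (c123 == 1%g :> {perm 'I_3}) = false.
Proof. by apply/negbTE/eqP => /permP/(_ i0); rewrite ?perm1 !vals => /(congr1 val); rewrite /= !inordK. Qed.
Lemma neq_c123_t12 : (c123 == t12 :> {perm 'I_3}) = false.
Proof. by apply/negbTE/eqP => /permP/(_ i1); rewrite ?perm1 !vals => /(congr1 val); rewrite /= !inordK. Qed.
Lemma neq_c123_t13 : (c123 == t13 :> {perm 'I_3}) = false.
Proof. by apply/negbTE/eqP => /permP/(_ i0); rewrite ?perm1 !vals => /(congr1 val); rewrite /= !inordK. Qed.
Lemma neq_c123_t23 : (c123 == t23 :> {perm 'I_3}) = false.
Proof. by apply/negbTE/eqP => /permP/(_ i0); rewrite ?perm1 !vals => /(congr1 val); rewrite /= !inordK. Qed.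
Lemma neq_c123_c132 : (c123 == c132 :> {perm 'I_3}) = false.
Proof. by apply/negbTE/eqP => /permP/(_ i0); rewrite ?perm1 !vals => /(congr1 val); rewrite /= !inordK. Qed.
Lemma neq_c132_1 : (c132 == 1%g :> {perm 'I_3}) = false.
Proof. by apply/negbTE/eqP => /permP/(_ i0); rewrite ?perm1 !vals => /(congr1 val); rewrite /= !inordK. Qed.
Lemma neq_c132_t12 : (c132 == t12 :> {perm 'I_3}) = false.
Proof. by apply/negbTE/eqP => /permP/(_ i0); rewrite ?perm1 !vals => /(congr1 val); rewrite /= !inordK. Qed.
Lemma neq_c132_t13 : (c132 == t13 :> {perm 'I_3}) = false.
Proof. by apply/negbTE/eqP => /permP/(_ i1); rewrite ?perm1 !vals => /(congr1 val); rewrite /= !inordK. Qed.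
Lemma neq_c132_t23 : (c132 == t23 :> {perm 'I_3}) = false.
Proof. by apply/negbTE/eqP => /permP/(_ i0); rewrite ?perm1 !vals => /(congr1 val); rewrite /= !inordK. Qed.
Lemma neq_c132_c123 : (c132 == c123 :> {perm 'I_3}) = false.
Proof. by apply/negbTE/eqP => /permP/(_ i0); rewrite ?perm1 !vals => /(congr1 val); rewrite /= !inordK. Qed.
Definition neqs := (neq_1_t12, neq_1_t13, neq_1_t23, neq_1_c123, neq_1_c132, neq_t12_1, neq_t12_t13, neq_t12_t23, neq_t12_c123, neq_t12_c132, neq_t13_1, neq_t13_t12, neq_t13_t23, neq_t13_c123, neq_t13_c132, neq_t23_1, neq_t23_t12, neq_t23_t13, neq_t23_c123, neq_t23_c132, neq_c123_1, neq_c123_t12, neq_c123_t13, neq_c123_t23, neq_c123_c132, neq_c132_1, neq_c132_t12, neq_c132_t13, neq_c132_t23, neq_c132_c123).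
Lemma mul_t12_t12 : (t12 * t12 = 1%g :> {perm 'I_3})%g.
Proof. by apply/permP => i; case: (ord3 i) => [->|[->|->]]; rewrite !permM ?perm1 !vals. Qed.
Lemma mul_t12_t13 : (t12 * t13 = c123 :> {perm 'I_3})%g.
Proof. by apply/permP => i; case: (ord3 i) => [->|[->|->]]; rewrite !permM ?perm1 !vals. Qed.
Lemma mul_t12_t23 : (t12 * t23 = c132 :> {perm 'I_3})%g.
Proof. by apply/permP => i; case: (ord3 i) => [->|[->|->]]; rewrite !permM ?perm1 !vals. Qed.
Lemma mul_t12_c123 : (t12 * c123 = t13 :> {perm 'I_3})%g.
Proof. by apply/permP => i; case: (ord3 i) => [->|[->|->]]; rewrite !permM ?perm1 !vals. Qed.
Lemma mul_t12_c132 : (t12 * c132 = t23 :> {perm 'I_3})%g.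
Proof. by apply/permP => i; case: (ord3 i) => [->|[->|->]]; rewrite !permM ?perm1 !vals. Qed.
Lemma mul_t13_t12 : (t13 * t12 = c132 :> {perm 'I_3})%g.
Proof. by apply/permP => i; case: (ord3 i) => [->|[->|->]]; rewrite !permM ?perm1 !vals. Qed.
Lemma mul_t13_t13 : (t13 * t13 = 1%g :> {perm 'I_3})%g.
Proof. by apply/permP => i; case: (ord3 i) => [->|[->|->]]; rewrite !permM ?perm1 !vals. Qed.
Lemma mul_t13_t23 : (t13 * t23 = c123 :> {perm 'I_3})%g.
Proof. by apply/permP => i; case: (ord3 i) => [->|[->|->]]; rewrite !permM ?perm1 !vals. Qed.
Lemma mul_t13_c123 : (t13 * c123 = t23 :> {perm 'I_3})%g.
Proof. by apply/permP => i; case: (ord3 i) => [->|[->|->]]; rewrite !permM ?perm1 !vals. Qed.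
Lemma mul_t13_c132 : (t13 * c132 = t12 :> {perm 'I_3})%g.
Proof. by apply/permP => i; case: (ord3 i) => [->|[->|->]]; rewrite !permM ?perm1 !vals. Qed.
Lemma mul_t23_t12 : (t23 * t12 = c123 :> {perm 'I_3})%g.
Proof. by apply/permP => i; case: (ord3 i) => [->|[->|->]]; rewrite !permM ?perm1 !vals. Qed.
Lemma mul_t23_t13 : (t23 * t13 = c132 :> {perm 'I_3})%g.
Proof. by apply/permP => i; case: (ord3 i) => [->|[->|->]]; rewrite !permM ?perm1 !vals. Qed.
Lemma mul_t23_t23 : (t23 * t23 = 1%g :> {perm 'I_3})%g.
Proof. by apply/permP => i; case: (ord3 i) => [->|[->|->]]; rewrite !permM ?perm1 !vals. Qed.
Lemma mul_t23_c123 : (t23 * c123 = t12 :> {perm 'I_3})%g.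
Proof. by apply/permP => i; case: (ord3 i) => [->|[->|->]]; rewrite !permM ?perm1 !vals. Qed.
Lemma mul_t23_c132 : (t23 * c132 = t13 :> {perm 'I_3})%g.
Proof. by apply/permP => i; case: (ord3 i) => [->|[->|->]]; rewrite !permM ?perm1 !vals. Qed.
Lemma mul_c123_t12 : (c123 * t12 = t23 :> {perm 'I_3})%g.
Proof. by apply/permP => i; case: (ord3 i) => [->|[->|->]]; rewrite !permM ?perm1 !vals. Qed.
Lemma mul_c123_t13 : (c123 * t13 = t12 :> {perm 'I_3})%g.
Proof. by apply/permP => i; case: (ord3 i) => [->|[->|->]]; rewrite !permM ?perm1 !vals. Qed.
Lemma mul_c123_t23 : (c123 * t23 = t13 :> {perm 'I_3})%g.
Proof. by apply/permP => i; case: (ord3 i) => [->|[->|->]]; rewrite !permM ?perm1 !vals. Qed.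
Lemma mul_c123_c123 : (c123 * c123 = c132 :> {perm 'I_3})%g.
Proof. by apply/permP => i; case: (ord3 i) => [->|[->|->]]; rewrite !permM ?perm1 !vals. Qed.
Lemma mul_c123_c132 : (c123 * c132 = 1%g :> {perm 'I_3})%g.
Proof. by apply/permP => i; case: (ord3 i) => [->|[->|->]]; rewrite !permM ?perm1 !vals. Qed.
Lemma mul_c132_t12 : (c132 * t12 = t13 :> {perm 'I_3})%g.
Proof. by apply/permP => i; case: (ord3 i) => [->|[->|->]]; rewrite !permM ?perm1 !vals. Qed.
Lemma mul_c132_t13 : (c132 * t13 = t23 :> {perm 'I_3})%g.
Proof. by apply/permP => i; case: (ord3 i) => [->|[->|->]]; rewrite !permM ?perm1 !vals. Qed.
Lemma mul_c132_t23 : (c132 * t23 = t12 :> {perm 'I_3})%g.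
Proof. by apply/permP => i; case: (ord3 i) => [->|[->|->]]; rewrite !permM ?perm1 !vals. Qed.
Lemma mul_c132_c123 : (c132 * c123 = 1%g :> {perm 'I_3})%g.
Proof. by apply/permP => i; case: (ord3 i) => [->|[->|->]]; rewrite !permM ?perm1 !vals. Qed.
Lemma mul_c132_c132 : (c132 * c132 = c123 :> {perm 'I_3})%g.
Proof. by apply/permP => i; case: (ord3 i) => [->|[->|->]]; rewrite !permM ?perm1 !vals. Qed.
Definition muls := (mul_t12_t12, mul_t12_t13, mul_t12_t23, mul_t12_c123, mul_t12_c132, mul_t13_t12, mul_t13_t13, mul_t13_t23, mul_t13_c123, mul_t13_c132, mul_t23_t12, mul_t23_t13, mul_t23_t23, mul_t23_c123, mul_t23_c132, mul_c123_t12, mul_c123_t13, mul_c123_t23, mul_c123_c123, mul_c123_c132, mul_c132_t12, mul_c132_t13, mul_c132_t23, mul_c132_c123, mul_c132_c132).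

Lemma inv_t12 : (t12^-1 = t12)%g. Proof. by apply/eqP; rewrite eq_invg_mul muls. Qed.
Lemma inv_t13 : (t13^-1 = t13)%g. Proof. by apply/eqP; rewrite eq_invg_mul muls. Qed.
Lemma inv_t23 : (t23^-1 = t23)%g. Proof. by apply/eqP; rewrite eq_invg_mul muls. Qed.
Lemma inv_c123 : (c123^-1 = c132)%g. Proof. by []. Qed.
Lemma inv_c132 : (c132^-1 = c123)%g. Proof. by rewrite /c132 invgK. Qed.
Definition invs := (invg1, inv_t12, inv_t13, inv_t23, inv_c123, inv_c132).

Definition S3s : seq {perm 'I_3} := [:: 1%g; t12; t13; t23; c123; c132].

Lemma card_S3 : #|{perm 'I_3}| = 6%N.
Proof. by rewrite card_Sn. Qed.

Lemma S3s_uniq : uniq S3s.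
Proof. by rewrite /= !inE !neqs. Qed.

Lemma S3s_all : S3s =i predT.
Proof.
apply/subset_cardP; last exact: subset_predT.
by rewrite (card_uniqP S3s_uniq) /= card_S3.
Qed.

Lemma S3_ind (P : {perm 'I_3} -> Prop) :
  P 1%g -> P t12 -> P t13 -> P t23 -> P c123 -> P c132 -> forall x, P x.
Proof.
move=> H1 H2 H3 H4 H5 H6 x; have : x \in S3s by rewrite S3s_all.
rewrite !inE.
by do 5 (case/orP => [/eqP -> //|]); move/eqP ->.
Qed.

Lemma sum_S3 (R : nmodType) (F : {perm 'I_3} -> R) :
  \sum_x F x = F 1%g + F t12 + F t13 + F t23 + F c123 + F c132.
Proof.
rewrite (eq_bigl (mem S3s)); last by move=> x /=; exact: (esym (S3s_all x)).
by rewrite -big_uniq ?S3s_uniq //= !big_cons big_nil !addrA addr0.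
Qed.

Section Meas.
Variable R : realType.
Local Notation dl := (delta_id R).

Definition lc (a b c : R) (e : meas R) : meas R := fun x => a * dl x + b + c * e x.

Lemma sum_shift (F : {perm 'I_3} -> R) x : \sum_y F (y^-1 * x)%g = \sum_y F y.
Proof.
have hi : injective (fun z : {perm 'I_3} => (x * z^-1)%g).
  by move=> a b /mulgI /invg_inj.
rewrite (reindex_inj hi); apply: eq_bigr => z _.
by rewrite invMg invgK mulgKV.
Qed.

Lemma sum_dl_l (G : {perm 'I_3} -> R) : \sum_y dl y * G y = G 1%g.
Proof.
rewrite (bigD1 1%g) //= big1 ?addr0; first by rewrite /delta_id eqxx mul1r.
by move=> y /negbTE; rewrite /delta_id => ->; rewrite mul0r.
Qed.

Lemma sum_dl_r (G : {perm 'I_3} -> R) x : \sum_y G y * dl (y^-1 * x)%g = G x.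
Proof.
rewrite (bigD1 x) //= big1 ?addr0; first by rewrite /delta_id mulVg eqxx mulr1.
by move=> y yx; rewrite /delta_id -eq_mulVg1 (negbTE yx) mulr0.
Qed.

Lemma sum_dl : \sum_y dl y = 1.
Proof.
rewrite (eq_bigr (fun y => dl y * 1)) ?sum_dl_l // => y _; by rewrite mulr1.
Qed.

Lemma sum_cst (c : R) : \sum_(y : {perm 'I_3}) c = 6 * c.
Proof. by rewrite sumr_const card_S3 mulr_natl. Qed.

Lemma conv_lc (a b c a' b' c' : R) (e : meas R) :
  \sum_y e y = 0 -> (forall x : {perm 'I_3}, Defs.conv e e x = 0) ->
  Defs.conv (lc a b c e) (lc a' b' c' e) =
  lc (a * a') (a * b' + b * a' + 6 * b * b') (a * c' + c * a') e.
Proof.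
move=> He Hee; apply/funext => x; rewrite /Defs.conv /lc.
pose H := fun y : {perm 'I_3} => a' * dl (y^-1 * x)%g + b' + c' * e (y^-1 * x)%g.
transitivity (a * (\sum_y dl y * H y) + b * (\sum_y H y) + c * (\sum_y e y * H y)).
  rewrite !mulr_sumr -!big_split /=; apply: eq_bigr => y _; rewrite /H; ring.
rewrite sum_dl_l.
have SH : \sum_y H y = a' + 6 * b'.
  rewrite /H !big_split /= -!mulr_sumr sum_cst.
  rewrite (sum_shift (fun y => dl y)) (sum_shift (fun y => e y)) sum_dl He; ring.
have SeH : \sum_y e y * H y = a' * e x.
  rewrite /H (eq_bigr (fun y => a' * (e y * dl (y^-1 * x)%g) + b' * e y
     + c' * (e y * e (y^-1 * x)%g))); last by move=> y _; ring.
  rewrite !big_split /= -!mulr_sumr sum_dl_r He.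
  have := Hee x; rewrite /Defs.conv => ->; ring.
rewrite SH SeH /H invg1 mul1g; ring.
Qed.

Lemma convn_lc (a b c : R) (e : meas R) :
  \sum_y e y = 0 -> (forall x : {perm 'I_3}, Defs.conv e e x = 0) -> forall n,
  convn (lc a b c e) n =
  lc (a ^+ n) (((a + 6 * b) ^+ n - a ^+ n) / 6) (n%:R * a ^+ n.-1 * c) e.
Proof.
move=> He Hee; elim=> [|n IH].
  by apply/funext => x; rewrite /convn /= /lc !expr0 subrr !mul0r mul1r !addr0.
rewrite /convn iterS -/(convn _ n) IH conv_lc //; congr lc.
- by rewrite exprS.
- rewrite !exprS; field.
  by [].
- case: n {IH} => [|n] /=; first by rewrite !mul0r !expr0 !mulr0 add0r !mulr1 mul1r.
  rewrite exprS -[(n.+2)%:R]natr1 -[(n.+1)%:R]natr1; ring.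
Qed.

Lemma conj_lc (a b c : R) (e : meas R) g : conj_img (lc a b c e) g = lc a b c (conj_img e g).
Proof. by apply/funext => y; rewrite /conj_img /lc /delta_id conjg_eq1. Qed.

Lemma conj_conv (f h : meas R) g :
  conj_img (Defs.conv f h) g = Defs.conv (conj_img f g) (conj_img h g).
Proof.
apply/funext => y; rewrite /conj_img /Defs.conv [RHS](reindex_inj (conjg_inj g)) /=.
by apply: eq_bigr => z _; rewrite conjgK conjMg conjVg conjgK.
Qed.

Lemma sum_conj (f : meas R) g : \sum_y conj_img f g y = \sum_y f y.
Proof.
by rewrite (reindex_inj (conjg_inj g)); apply: eq_bigr => z _; rewrite /conj_img conjgK.
Qed.

Definition dd : meas R := fun x =>
  if x == t12 then -1 else if x == t23 then 1 else
  if x == c123 then 1 else if x == c132 then -1 else 0.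

Lemma dd_sum : \sum_y dd y = 0.
Proof. rewrite sum_S3 /dd ?neqs ?eqxx /=; lra. Qed.

Lemma dd_sq x : Defs.conv dd dd x = 0.
Proof.
move: x; apply: S3_ind;
rewrite /Defs.conv sum_S3 !invs ?(mulg1, mul1g, muls) /dd ?neqs ?eqxx /=; lra.
Qed.

Lemma dd_avg x : \sum_g conj_img dd g x = 0.
Proof.
move: x; apply: S3_ind;
rewrite /conj_img sum_S3 !invs !conjgE !invs ?(mulg1, mul1g, muls) /dd ?neqs ?eqxx /=; lra.
Qed.

Lemma m_lc : m_jump R = lc (-1) 1 1 dd.
Proof.
apply/funext; apply: S3_ind;
rewrite /m_jump /lc /delta_id /dd ?neqs ?eqxx /=; lra.
Qed.

Lemma m0_lc : m0_jump R = lc (-1) 1 0 dd.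
Proof.
apply/funext; apply: S3_ind;
rewrite /m0_jump /lc /delta_id /dd ?neqs ?eqxx /=; lra.
Qed.

Lemma mass_lc (a b c : R) (e : meas R) : mass (lc a b c e) = a + 6 * b + c * \sum_y e y.
Proof.
rewrite /mass /lc !big_split /= -!mulr_sumr sum_dl sum_cst; ring.
Qed.

End Meas.
Local Open Scope classical_set_scope.
Local Open Scope ring_scope.

Section Series.
Variable R : realType.
Local Notation lc := (lc R).
Local Notation dd := (dd R).
Local Notation dl := (delta_id R).

Lemma fact_neq0 (k : nat) : (k`!%:R : R) != 0.
Proof. by rewrite pnatr_eq0 -lt0n fact_gt0. Qed.

Lemma cps_lc (c : R) :
  cpsg (lc (-1) 1 c dd) 1 = lc (expR (-6)) ((1 - expR (-6)) / 6) (c * expR (-6)) dd.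
Proof.
apply/funext => x.
have Hm : mass (lc (-1) 1 c dd) = 5 by rewrite mass_lc dd_sum; ring.
rewrite /cpsg Hm mul1r.
have Hc := @convn_lc R (-1) 1 c dd (dd_sum R) (dd_sq R).
pose A := dl x; pose D := dd x.
pose e1 := exp_coeff (-1 : R); pose e5 := exp_coeff (5 : R).
pose h := fun k : nat => k%:R * (-1) ^+ k.-1 / (k`!%:R : R).
pose F := fun k : nat => 1 ^+ k / (k`!)%:R * convn (lc (-1) 1 c dd) k x.
have HF : F = fun k => (A - 6^-1) * e1 k + 6^-1 * e5 k + c * D * h k.
  apply/funext => k; rewrite /F Hc /lc /e1 /e5 /h /exp_coeff /= -/A -/D.
  have -> : (-1 + 6 * 1 : R) = 5 by ring.
  rewrite expr1n; field.
  by rewrite fact_neq0.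
have Hh : forall n, series h n.+1 = series e1 n.
  move=> n; rewrite /series /= big_nat_recl // /h /= mul0r mul0r add0r.
  apply: eq_bigr => k _; rewrite /e1 /exp_coeff /= factS natrM; field.
  rewrite fact_neq0 /=; apply: lt0r_neq0; apply: (lt_le_trans ltr01); by rewrite lerDl ler0n.
have HS : forall n, series F n.+1 =
    (A - 6^-1) * series e1 n.+1 + 6^-1 * series e5 n.+1 + c * D * series e1 n.
  move=> n; rewrite HF /series /= !big_split /= -!mulr_sumr; congr (_ + _ * _); exact: (Hh n).
have cv : series F @ \oo --> (A - 6^-1) * expR (-1) + 6^-1 * expR 5 + c * D * expR (-1).
  rewrite -cvg_shiftS.
  have -> : [sequence series F n.+1]_n = (fun n => (A - 6^-1) * series e1 n.+1 +
      6^-1 * series e5 n.+1 + c * D * series e1 n).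
    by apply/funext => m; rewrite /= HS.
  have c1 : series e1 @ \oo --> expR (-1) by exact: is_cvg_series_exp_coeff.
  have c1' : (fun n => series e1 n.+1) @ \oo --> expR (-1).
    by have := c1; rewrite -cvg_shiftS.
  have c5' : (fun n => series e5 n.+1) @ \oo --> expR 5.
    by have := is_cvg_series_exp_coeff (5 : R); rewrite -cvg_shiftS.
  apply: cvgD; first apply: cvgD.
  - exact: cvgMl_tmp.
  - exact: cvgMl_tmp.
  - exact: cvgMl_tmp.
rewrite (cvg_lim _ cv) //.
have h1 : expR (-6) = expR (-5) * expR (-1) :> R.
  by rewrite -expRD; congr expR; ring.
have h2 : expR 5 = (expR (-5))^-1 :> R by rewrite expRN invrK.
rewrite /lc h1 h2 -/A -/D; field.
by rewrite lt0r_neq0 // expR_gt0.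
Qed.

End Series.

Theorem lemma8p17 (R : realType) :
  quasi_invariant (cpsg (m_jump R) 1) /\
  forall n : nat,
    unif_avg (fun g => convn (conj_img (cpsg (m_jump R) 1) g) n)
    = convn (cpsg (m0_jump R) 1) n.
Proof.
set a : R := expR (-6); set b : R := (1 - a) / 6.
have Hmu : cpsg (m_jump R) 1 = lc R a b (1 * a) (dd R) by rewrite m_lc cps_lc.
have Heta : cpsg (m0_jump R) 1 = lc R a b (0 * a) (dd R) by rewrite m0_lc cps_lc.
have main : forall n : nat,
    unif_avg (fun g => convn (conj_img (cpsg (m_jump R) 1) g) n)
    = convn (cpsg (m0_jump R) 1) n.
  move=> n; rewrite Hmu Heta (@convn_lc R a b (0 * a) (dd R) (dd_sum R) (dd_sq R)).
  apply/funext => x; rewrite /unif_avg card_S3.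
  have E : forall g, convn (conj_img (lc R a b (1 * a) (dd R)) g) n x =
      a ^+ n * delta_id R x + ((a + 6 * b) ^+ n - a ^+ n) / 6
      + n%:R * a ^+ n.-1 * (1 * a) * conj_img (dd R) g x.
    move=> g; rewrite conj_lc convn_lc //.
    - by rewrite sum_conj dd_sum.
    - by move=> y; rewrite -conj_conv /conj_img dd_sq.
  rewrite (eq_bigr _ (fun g _ => E g)) !big_split /= -!mulr_sumr !sum_cst dd_avg /lc.
  by field.
have pos : 0 < a by exact: expR_gt0.
have le1 : a <= 1 by rewrite /a expR_le1 lerNl oppr0 ler0n.
have prob : is_prob (cpsg (m0_jump R) 1).
  rewrite Heta; split.
  - move=> x; rewrite /lc mul0r mul0r addr0 /b.
    apply: addr_ge0; first by apply: mulr_ge0; [exact: ltW | rewrite /delta_id ler0n].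
    by apply: divr_ge0; [rewrite subr_ge0 | rewrite ler0n].
  - have := mass_lc R a b (0 * a) (dd R); rewrite /mass dd_sum /b => ->; field.
  by [].
split => //; exists (cpsg (m0_jump R) 1); split => //.
Qed.
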